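(* Let $N\ge 3$, $R>0$, and let $p^i > \frac{N+2}{N-2}$ be such that $R^i_{p^i} = R$ for some integer $i\ge 1$. Let $U^*_{p^i}$ be the solution of $(\ast)_{p^i}$ below, regarded as the radial function $x\mapsto U^*_{p^i}(|x|)$ on $B_R\setminus\{0\}$. Then $m(U^*_{p^i}) < \infty$ if $p^i > p_{JL}$, while $m(U^*_{p^i}) = \infty$ if $\frac{N+2}{N-2} < p^i < p_{JL}$.
   Context: For $N\ge 3$ and $p > \frac{N+2}{N-2}$ set $\theta = \frac{2}{p-1}$ and $A_{p,N} = [\theta(N-2-\theta)]^{\frac{1}{p-1}}$. It is known (Miyamoto) that there is a unique function $U_p^*$ solving $$(\ast)_p\qquad -u'' - \frac{N-1}{r}u' + u = u^p \text{ on } (0,\infty),\qquad \lim_{r\to 0^+} r^\theta u(r) = A_{p,N},\qquad u>0 \text{ on } (0,\infty).$$ $(R_p^i)_{i\ge1}$ denotes the increasing sequence of positive numbers with $(U_p^* )'(R_p^i)=0$; thus when $R_p^i = R$, $U_p^*$ satisfies the Neumann condition on $\partial B_R$, where $B_R\subset\mathbb{R}^N$ is the ball of radius $R$ centred at $0$. The Joseph–Lundgren exponent is $p_{JL} = 1 + \frac{4}{N-4-2\sqrt{N-1}}$ if $N\ge 11$ and $p_{JL}=\infty$ if $3\le N\le 10$. For a solution $v$ (with exponent $p$) the radial Morse index $m(v)$ is the number of negative eigenvalues $\alpha$, counted with multiplicity, of the problem $-\Delta\phi + \phi - p v^{p-1}\phi = \alpha\phi$ in $B_R\setminus\{0\}$,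 $\partial_\nu\phi = 0$ on $\partial B_R$, $\phi$ radially symmetric. *)

(* Defs.v *)
From Stdlib Require Import Reals Lra List.
From Coquelicot Require Import Coquelicot.
Open Scope R_scope.

Definition p_S (N : nat) : R := (INR N + 2) / (INR N - 2).

Definition p_JL (N : nat) : Rbar :=
  if (11 <=? N)%nat
  then Finite (1 + 4 / (INR N - 4 - 2 * sqrt (INR N - 1)))
  else p_infty.

Definition theta (p : R) : R := 2 / (p - 1).

Definition A_pN (p : R) (N : nat) : R :=
  Rpower (theta p * (INR N - 2 - theta p)) (1 / (p - 1)).

(* u solves ( * )_p : classical C^2 solution on (0,oo) of
   -u'' - (N-1)/r u' + u = u^p, with r^theta u(r) -> A_{p,N} as r -> 0+, u > 0. *)
Definition singular_solution (N : nat) (p : R) (u : R -> R) : Prop :=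
  (forall r, 0 < r -> 0 < u r) /\
  (forall r, 0 < r ->
     ex_derive u r /\ ex_derive (Derive u) r /\
     - Derive (Derive u) r - (INR N - 1) / r * Derive u r + u r = Rpower (u r) p) /\
  filterlim (fun r => Rpower r (theta p) * u r) (at_right 0) (locally (A_pN p N)).

(* R = R_p^i : R is the i-th positive zero (in increasing order) of u'. *)
Definition ith_critical_radius (u : R -> R) (i : nat) (R0 : R) : Prop :=
  0 < R0 /\ Derive u R0 = 0 /\
  exists l : list R, NoDup l /\ length l = (i - 1)%nat /\
    forall r, In r l <-> (0 < r < R0 /\ Derive u r = 0).

(* Radial test functions on B_R \ {0}: C^1 on (0,oo) and vanishing near the origin
   (no boundary condition at r = R: the Neumann condition is natural). *)
Definition radial_test_fun (phi : R -> R) : Prop :=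
  (forall r, 0 < r -> ex_derive phi r /\ continuous (Derive phi) r) /\
  exists delta, 0 < delta /\ forall r, r < delta -> phi r = 0.

(* Quadratic form of  -Delta + 1 - p v^{p-1}  on radial functions in B_R
   (up to the positive constant |S^{N-1}|). *)
Definition Qform (N : nat) (p : R) (v : R -> R) (R0 : R) (phi : R -> R) : R :=
  RInt (fun r => (Derive phi r ^ 2 + phi r ^ 2 - p * Rpower (v r) (p - 1) * phi r ^ 2)
                 * r ^ (N - 1)) 0 R0.

Fixpoint lincomb (k : nat) (c : nat -> R) (phi : nat -> R -> R) (r : R) : R :=
  match k with
  | O => 0
  | S k' => lincomb k' c phi r + c k' * phi k' r
  end.

(* m(v) >= k : there is a k-dimensional space of radial test functions on which the
   quadratic form is negative definite (variational / min-max count of the negative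
   eigenvalues, with multiplicity, of the radial Neumann problem in B_R \ {0}). *)
Definition morse_index_ge (N : nat) (p : R) (v : R -> R) (R0 : R) (k : nat) : Prop :=
  exists phi : nat -> R -> R,
    (forall i, (i < k)%nat -> radial_test_fun (phi i)) /\
    forall c : nat -> R, (exists i, (i < k)%nat /\ c i <> 0) ->
      Qform N p v R0 (lincomb k c phi) < 0.

Definition morse_index_finite N p v R0 : Prop :=
  exists n : nat, forall k, morse_index_ge N p v R0 k -> (k <= n)%nat.

Definition morse_index_infinite N p v R0 : Prop :=
  forall k : nat, morse_index_ge N p v R0 k.

(* Main.v *)
Require Import Defs.
From Stdlib Require Import Reals Lra Lia Classical.
From Coquelicot Require Import Coquelicot.
Open Scope R_scope.

Lemma cR (f : R -> R) x : continuity_pt f x <-> continuous f x.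
Proof. split; intro H; apply continuity_pt_filterlim; exact H. Qed.

Lemma c_plus (f g : R -> R) x : continuous f x -> continuous g x -> continuous (fun y => f y + g y) x.
Proof. intros. apply cR. apply continuity_pt_plus; apply cR; auto. Qed.
Lemma c_minus (f g : R -> R) x : continuous f x -> continuous g x -> continuous (fun y => f y - g y) x.
Proof. intros. apply cR. apply continuity_pt_minus; apply cR; auto. Qed.
Lemma c_mult (f g : R -> R) x : continuous f x -> continuous g x -> continuous (fun y => f y * g y) x.
Proof. intros. apply cR. apply continuity_pt_mult; apply cR; auto. Qed.
Lemma c_const (c x : R) : continuous (fun _ => c) x.
Proof. apply continuous_const. Qed.
Lemma c_id (x : R) : continuous (fun y => y) x.
Proof. apply continuous_id. Qed.
Lemma c_pow (f : R -> R) n x : continuous f x -> continuous (fun y => f y ^ n) x.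
Proof. intros H. induction n; simpl. apply c_const. apply c_mult; auto. Qed.

Definition good (phi : R -> R) : Prop :=
  (forall r, ex_derive phi r /\ continuous (Derive phi) r) /\
  exists delta, 0 < delta /\ forall r, r < delta -> phi r = 0.

Lemma loc_lt (d r : R) : r < d -> locally r (fun y => y < d).
Proof. intros H. apply (locally_interval _ r m_infty (Finite d)); simpl; auto. Qed.

Lemma zero_near (phi : R -> R) d r : (forall y, y < d -> phi y = 0) -> r < d ->
  is_derive phi r 0 /\ Derive phi r = 0.
Proof.
  intros H Hr.
  assert (L : locally r (fun t => (fun _ => 0) t = phi t)).
  { eapply filter_imp; [|apply (loc_lt d r Hr)]. intros y Hy; simpl; rewrite H; auto. }
  assert (D : is_derive phi r 0).
  { eapply is_derive_ext_loc. exact L. apply (is_derive_const 0 r). }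
  split; auto. apply is_derive_unique; auto.
Qed.

Lemma test_good phi : radial_test_fun phi -> good phi.
Proof.
  intros [H1 [d [Hd H2]]]. split; [|exists d; split; auto].
  intro r. destruct (Rlt_or_le r d) as [Hr|Hr].
  - destruct (zero_near phi d r H2 Hr) as [D1 D2]. split. eexists; eauto.
    eapply continuous_ext_loc; [|apply (c_const 0 r)].
    eapply filter_imp; [|apply (loc_lt d r Hr)]. intros y Hy; simpl.
    destruct (zero_near phi d y H2 Hy); auto.
  - apply H1; lra.
Qed.

Fixpoint sumk (k : nat) (f : nat -> R) : R :=
  match k with O => 0 | S k' => sumk k' f + f k' end.

Lemma lincomb_sumk k c phi r : lincomb k c phi r = sumk k (fun i => c i * phi i r).
Proof. induction k; simpl; auto. rewrite IHk; auto. Qed.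

Lemma good_lincomb k c phi : (forall i, (i < k)%nat -> good (phi i)) ->
  good (lincomb k c phi) /\ forall r, Derive (lincomb k c phi) r = lincomb k c (fun i => Derive (phi i)) r.
Proof.
  induction k; intros H.
  - simpl. assert (G : good (fun _ : R => 0)).
    { split. intro r; split. eexists; apply (is_derive_const 0 r).
      eapply continuous_ext; [|apply (c_const 0 r)]. intro y; simpl.
      symmetry; apply (is_derive_unique _ _ 0), (is_derive_const 0 y).
      exists 1; split; auto; lra. }
    split; auto. intro r. apply (is_derive_unique _ _ 0), (is_derive_const 0 r).
  - destruct IHk as [[G1 [d [Hd G2]]] D]. intros; apply H; lia.
    destruct (H k (Nat.lt_succ_diag_r k)) as [K1 [e [He K2]]].
    assert (DE : forall r, Derive (lincomb (S k) c phi) r = lincomb (S k) c (fun i => Derive (phi i)) r).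
    { intro r. simpl. rewrite <- D.
      rewrite (Derive_plus (lincomb k c phi) (fun x => c k * phi k x)).
      rewrite Derive_scal. auto. apply G1. apply ex_derive_scal. apply K1. }
    split; auto. split.
    + intro r. split. simpl. apply (ex_derive_plus (lincomb k c phi) (fun x => c k * phi k x)).
      apply G1. apply ex_derive_scal, K1.
      eapply continuous_ext. intro y. symmetry; apply DE. simpl.
      apply c_plus. eapply continuous_ext. intro y. apply D. apply G1.
      apply c_mult. apply c_const. apply K1.
    + exists (Rmin d e). split. apply Rmin_pos; auto. intros r Hr. simpl.
      rewrite G2, K2. ring. apply Rlt_le_trans with (1:=Hr), Rmin_r.
      apply Rlt_le_trans with (1:=Hr), Rmin_l.
Qed.

Definition Fint (N : nat) (p : R) (v : R -> R) (phi : R -> R) (r : R) : R :=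
  (Derive phi r ^ 2 + phi r ^ 2 - p * Rpower (v r) (p - 1) * phi r ^ 2) * r ^ (N - 1).

Lemma Qform_Fint N p v R0 phi : Qform N p v R0 phi = RInt (Fint N p v phi) 0 R0.
Proof. reflexivity. Qed.

Lemma exd_cont (f : R -> R) x : ex_derive f x -> continuous f x.
Proof. intro H. apply (@ex_derive_continuous R_AbsRing R_NormedModule f x H). Qed.

Lemma ex_RInt_cR (f : R -> R) a b : (forall z, Rmin a b <= z <= Rmax a b -> continuous f z) -> ex_RInt f a b.
Proof. intro H. apply (@ex_RInt_continuous R_CompleteNormedModule f a b H). Qed.

Lemma Rpower_derive y x : 0 < x -> is_derive (fun z => Rpower z y) x (y * Rpower x (y - 1)).
Proof. intro H. apply is_derive_Reals, derivable_pt_lim_power; auto. Qed.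

Lemma Rpower_cont y x : 0 < x -> continuous (fun z => Rpower z y) x.
Proof. intro H. apply exd_cont. eexists. apply Rpower_derive; auto. Qed.

Lemma Fint_cont N p v phi r : (forall r, 0 < r -> continuous v r /\ 0 < v r) -> good phi -> 0 <= r ->
  continuous (Fint N p v phi) r.
Proof.
  intros Hv [G1 [d [Hd G2]]] Hr.
  destruct (Rlt_or_le r d) as [Hrd|Hrd].
  - eapply continuous_ext_loc; [|apply (c_const 0 r)].
    eapply filter_imp; [|apply (loc_lt d r Hrd)]. intros y Hy; simpl.
    unfold Fint. destruct (zero_near phi d y G2 Hy) as [_ ->]. rewrite G2; auto. ring.
  - unfold Fint. apply c_mult; [|apply c_pow, c_id].
    apply c_minus. apply c_plus; apply c_pow. apply G1. apply exd_cont, G1.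
    apply c_mult; [|apply c_pow, exd_cont, G1].
    apply c_mult. apply c_const.
    apply (continuous_comp v (fun z => Rpower z (p-1))). apply Hv; lra.
    apply Rpower_cont. apply Hv; lra.
Qed.

Lemma Fint_ex N p v phi a b : (forall r, 0 < r -> continuous v r /\ 0 < v r) -> good phi -> 0 <= a -> 0 <= b ->
  ex_RInt (Fint N p v phi) a b.
Proof.
  intros. apply ex_RInt_cR. intros z Hz. apply Fint_cont; auto.
  assert (0 <= Rmin a b) by (apply Rmin_glb; auto). lra.
Qed.


Lemma isd_eq (f : R -> R) x l l' : is_derive f x l -> l = l' -> is_derive f x l'.
Proof. intros H ->; auto. Qed.
Lemma isd_mult (f g : R -> R) x df dg : is_derive f x df -> is_derive g x dg ->
  is_derive (fun y => f y * g y) x (df * g x + f x * dg).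
Proof. intros. apply (is_derive_mult f g x df dg); auto. intros; apply Rmult_comm. Qed.
Lemma isd_comp (f g : R -> R) x df dg : is_derive f (g x) df -> is_derive g x dg ->
  is_derive (fun y => f (g y)) x (df * dg).
Proof. intros. eapply isd_eq. apply (is_derive_comp f g x df dg); auto. simpl. unfold scal; simpl. unfold mult; simpl. ring. Qed.
Lemma isd_plus (f g : R -> R) x df dg : is_derive f x df -> is_derive g x dg ->
  is_derive (fun y => f y + g y) x (df + dg).
Proof. intros. apply (is_derive_plus f g x df dg); auto. Qed.
Lemma isd_sq (f : R -> R) x df : is_derive f x df -> is_derive (fun y => f y ^ 2) x (2 * f x * df).
Proof. intros. eapply isd_eq. apply is_derive_pow; eauto. simpl. ring. Qed.

Lemma piece (F G dG phi : R -> R) a b :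
  a <= b -> good phi ->
  (forall x, a <= x <= b -> continuous F x) ->
  (forall x, a <= x <= b -> is_derive G x (dG x) /\ continuous dG x /\ continuous G x) ->
  (forall x, a < x < b -> 0 <= F x + (dG x * phi x ^ 2 + G x * (2 * phi x * Derive phi x))) ->
  G a * phi a ^ 2 - G b * phi b ^ 2 <= RInt F a b.
Proof.
  intros Hab [G1 _] HF HG Hpt.
  set (dH := fun x => dG x * phi x ^ 2 + G x * (2 * phi x * Derive phi x)).
  assert (Hmin : Rmin a b = a) by (apply Rmin_left; auto).
  assert (Hmax : Rmax a b = b) by (apply Rmax_right; auto).
  assert (IH : is_RInt dH a b (minus (G b * phi b ^ 2) (G a * phi a ^ 2))).
  { apply (is_RInt_derive (fun x => G x * phi x ^ 2)); rewrite Hmin, Hmax; intros x Hx.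
    - destruct (HG x Hx) as [D _]. destruct (G1 x) as [[l Hl] _].
      unfold dH. replace (Derive phi x) with l by (symmetry; apply is_derive_unique; auto).
      eapply isd_eq. apply isd_mult. exact D. apply isd_sq. exact Hl. reflexivity.
    - destruct (HG x Hx) as [_ [C1 C2]]. unfold dH.
      apply c_plus; apply c_mult; auto. apply c_pow, exd_cont, G1.
      apply c_mult. apply c_mult. apply c_const. apply exd_cont, G1. apply G1. }
  assert (EF : ex_RInt F a b) by (apply ex_RInt_cR; rewrite Hmin, Hmax; auto).
  assert (EH : ex_RInt dH a b) by (eexists; eauto).
  assert (P : 0 <= RInt (fun x => F x + dH x) a b).
  { apply RInt_ge_0; auto. apply (ex_RInt_plus F dH); auto. }
  rewrite (RInt_plus F dH) in P; auto.
  rewrite (is_RInt_unique _ _ _ _ IH) in P. unfold plus, minus, opp in P; simpl in P.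
  unfold plus in P; simpl in P. lra.
Qed.

Lemma pt0 (al X Y r V q : R) : 0 < r -> 0 < q -> V * r ^ 2 <= al ^ 2 ->
  0 <= (X ^ 2 + Y ^ 2 - V * Y ^ 2) * (q * r ^ 2) +
       ((al * (2 * al) * q) * Y ^ 2 + (al * (q * r)) * (2 * Y * X)).
Proof.
  intros Hr Hq HV.
  replace ((X ^ 2 + Y ^ 2 - V * Y ^ 2) * (q * r ^ 2) + (al * (2 * al) * q * Y ^ 2 + al * (q * r) * (2 * Y * X)))
    with (q * ((r * X + al * Y) ^ 2 + (al ^ 2 - V * r ^ 2) * Y ^ 2 + r ^ 2 * Y ^ 2)) by ring.
  apply Rmult_le_pos. lra.
  assert (0 <= (r * X + al * Y) ^ 2) by apply pow2_ge_0.
  assert (0 <= (al ^ 2 - V * r ^ 2) * Y ^ 2) by (apply Rmult_le_pos; [lra| apply pow2_ge_0]).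
  assert (0 <= r ^ 2 * Y ^ 2) by (apply Rmult_le_pos; apply pow2_ge_0). lra.
Qed.

Lemma pt1 (X Y w V M W k d h rho : R) : 0 < rho -> rho <= w -> w <= W -> V <= M -> 0 <= M ->
  k = 2 * M * W + 1 -> d ^ 2 <= h ^ 2 -> h ^ 2 <= rho / (2 * k) ->
  0 <= (X ^ 2 + Y ^ 2 - V * Y ^ 2) * w + (k * Y ^ 2 + k * d * (2 * Y * X)).
Proof.
  intros Hr H1 H2 H3 H4 Hk H5 H6.
  assert (Hw : 0 < w) by lra. assert (Hkp : 0 < k) by (subst; nra).
  assert (E : (X ^ 2 + Y ^ 2 - V * Y ^ 2) * w + (k * Y ^ 2 + k * d * (2 * Y * X)) =
     ((w * X + k * d * Y) ^ 2 + (k * w - k ^ 2 * d ^ 2 + w ^ 2 - V * w ^ 2) * Y ^ 2) / w)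
    by (field; lra).
  rewrite E. apply Rmult_le_pos; [| left; apply Rinv_0_lt_compat; lra].
  assert (K1 : k ^ 2 * d ^ 2 <= k * w / 2).
  { assert (k ^ 2 * d ^ 2 <= k ^ 2 * h ^ 2) by (apply Rmult_le_compat_l; [apply pow2_ge_0|lra]).
    assert (k ^ 2 * h ^ 2 <= k ^ 2 * (rho / (2 * k))) by (apply Rmult_le_compat_l; [apply pow2_ge_0|lra]).
    replace (k ^ 2 * (rho / (2 * k))) with (k * rho / 2) in H0 by (field; lra).
    assert (k * rho / 2 <= k * w / 2) by (apply Rmult_le_compat_r; [lra| apply Rmult_le_compat_l; lra]).
    lra. }
  assert (K2 : V * w ^ 2 <= M * W * w).
  { assert (V * w ^ 2 <= M * w ^ 2) by (apply Rmult_le_compat_r; [apply pow2_ge_0|lra]).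
    assert (M * w ^ 2 <= M * W * w) by (replace (M * w ^ 2) with (M * w * w) by ring; apply Rmult_le_compat_r; [lra| apply Rmult_le_compat_l; lra]). lra. }
  assert (0 <= (w * X + k * d * Y) ^ 2) by apply pow2_ge_0.
  assert (0 <= k * w - k ^ 2 * d ^ 2 + w ^ 2 - V * w ^ 2).
  { subst k. nra. }
  assert (0 <= (k * w - k ^ 2 * d ^ 2 + w ^ 2 - V * w ^ 2) * Y ^ 2) by (apply Rmult_le_pos; auto; apply pow2_ge_0).
  lra.
Qed.

Lemma finite_core n p v rho R0 M :
  (forall r, 0 < r -> continuous v r /\ 0 < v r) -> 0 < rho < R0 -> 0 <= M ->
  (forall r, rho <= r <= R0 -> p * Rpower (v r) (p - 1) <= M) ->
  (forall r, 0 < r <= rho -> p * Rpower (v r) (p - 1) * r ^ 2 <= (INR (n + 1) / 2) ^ 2) ->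
  exists m, (1 <= m)%nat /\ forall psi, good psi ->
    (forall j, (j < m)%nat -> psi (rho + INR j * ((R0 - rho) / INR m)) = 0) ->
    0 <= RInt (Fint (S (S (S n))) p v psi) 0 R0.
Proof.
  intros Hv [Hr0 HrR] HM HVM HV0.
  set (W := R0 ^ (S (S n))). set (rw := rho ^ (S (S n))).
  assert (Hrw : 0 < rw) by (apply pow_lt; lra).
  set (k := 2 * M * W + 1).
  assert (HW : 0 <= W) by (apply pow_le; lra).
  assert (Hk : 0 < k) by (unfold k; nra).
  set (eps := rw / (2 * k)).
  assert (Heps : 0 < eps) by (unfold eps; apply Rdiv_lt_0_compat; lra).
  destruct (INR_unbounded ((R0 - rho) ^ 2 / eps)) as [m0 Hm0].
  exists (S m0). split; [lia|].
  set (m := S m0). set (h := (R0 - rho) / INR m).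
  assert (Hm1 : 1 <= INR m) by (unfold m; rewrite S_INR; assert (0 <= INR m0) by apply pos_INR; lra).
  assert (Hh : 0 < h) by (unfold h; apply Rdiv_lt_0_compat; lra).
  assert (Hh2 : h ^ 2 <= eps).
  { unfold h. assert (INR m > (R0 - rho) ^ 2 / eps) by (unfold m; rewrite S_INR; lra).
    assert (E1 : ((R0 - rho) / INR m) ^ 2 = (R0 - rho) ^ 2 / INR m / INR m) by (field; lra).
    rewrite E1.
    assert (E2 : (R0 - rho) ^ 2 / INR m <= (R0 - rho) ^ 2) .
    { unfold Rdiv. rewrite <- (Rmult_1_r ((R0 - rho)^2)) at 2. apply Rmult_le_compat_l. apply pow2_ge_0.
      rewrite <- Rinv_1. apply Rinv_le_contravar; lra. }
    apply Rle_trans with ((R0 - rho) ^ 2 / INR m). 2: { apply Rlt_le.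
      apply (Rmult_lt_reg_r (INR m / eps)). apply Rdiv_lt_0_compat; lra.
      replace ((R0 - rho) ^ 2 / INR m * (INR m / eps)) with ((R0 - rho) ^ 2 / eps) by (field; lra).
      replace (eps * (INR m / eps)) with (INR m) by (field; lra). lra. }
    unfold Rdiv at 1. rewrite <- (Rmult_1_r ((R0 - rho)^2 / INR m)) at 2. apply Rmult_le_compat_l.
    apply Rmult_le_pos. apply pow2_ge_0. left; apply Rinv_0_lt_compat; lra.
    rewrite <- Rinv_1. apply Rinv_le_contravar; lra. }
  intros psi Gpsi Hnodes.
  set (x := fun j => rho + INR j * h).
  assert (Hn : forall j, (j < m)%nat -> psi (x j) = 0) by (intros j Hj; apply (Hnodes j Hj)).
  assert (Hx : forall j, rho <= x j) by (intro j; unfold x; assert (0 <= INR j) by apply pos_INR; nra).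
  assert (Hxm : x m = R0) by (unfold x, h; field; lra).
  assert (Hxle : forall j, (j <= m)%nat -> x j <= R0).
  { intros j Hj. rewrite <- Hxm. unfold x. apply le_INR in Hj. nra. }
  set (F := Fint (S (S (S n))) p v psi).
  set (al := INR (n + 1) / 2).
  assert (Hpsi0 : psi 0 = 0). { destruct Gpsi as [_ [d [Hd Hz]]]. apply Hz; auto. }
  assert (IND : forall j, (j <= m)%nat -> 0 <= RInt F 0 (x j)).
  { induction j; intro Hj.
    - replace (x 0%nat) with rho by (unfold x; simpl; ring).
      eapply Rle_trans; [|apply (piece F (fun r => al * r ^ (S n)) (fun r => al * (2 * al) * r ^ n) psi 0 rho)].
      + rewrite Hpsi0. assert (psi rho = 0). { replace rho with (x 0%nat) by (unfold x; simpl; ring). apply Hn. unfold m; lia. }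
        rewrite H. simpl; lra.
      + lra.
      + auto.
      + intros y Hy. apply Fint_cont; auto; lra.
      + intros y Hy. split; [|split].
        * eapply isd_eq. apply is_derive_scal. apply is_derive_pow. apply (is_derive_id y).
          unfold al. simpl pred. replace (INR (S n)) with (INR (n + 1)) by (f_equal; lia).
          unfold one; simpl. field.
        * apply c_mult. apply c_const. apply c_pow, c_id.
        * apply c_mult. apply c_const. apply c_pow, c_id.
      + intros y Hy. unfold F, Fint. replace (S (S (S n)) - 1)%nat with (S (S n)) by lia.
        replace (y ^ S (S n)) with (y ^ n * y ^ 2) by (simpl; ring).
        replace (y ^ S n) with (y ^ n * y) by (simpl; ring).
        apply pt0. lra. apply pow_lt; lra. apply HV0; lra.
    - assert (IH := IHj ltac:(lia)).
      assert (Ej : RInt F 0 (x (S j)) = RInt F 0 (x j) + RInt F (x j) (x (S j))).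
      { symmetry. apply (RInt_Chasles F 0 (x j) (x (S j))); apply Fint_ex; auto;
          try (apply Rle_trans with rho; [lra | apply Hx]); lra. }
      rewrite Ej.
      assert (Hxs : x (S j) = x j + h) by (unfold x; rewrite S_INR; ring).
      assert (0 <= RInt F (x j) (x (S j))).
      { eapply Rle_trans; [|apply (piece F (fun r => k * (r - x (S j))) (fun _ => k) psi (x j) (x (S j)))].
        + rewrite (Hn j ltac:(lia)). replace (x (S j) - x (S j)) with 0 by ring. lra.
        + lra.
        + auto.
        + intros y Hy. apply Fint_cont; auto. pose proof (Hx j). lra.
        + intros y Hy. split; [|split].
          * eapply isd_eq. apply is_derive_scal. apply (isd_plus (fun r => r) (fun _ => - x (S j))).
            apply is_derive_id. apply is_derive_const. unfold one, zero; simpl; ring.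
          * apply c_const.
          * apply c_mult. apply c_const. apply c_minus. apply c_id. apply c_const.
        + intros y Hy. unfold F, Fint. replace (S (S (S n)) - 1)%nat with (S (S n)) by lia.
          pose proof (Hx j). pose proof (Hxle (S j) Hj).
          apply (pt1 _ _ _ _ M W k _ h rw); auto.
          * unfold rw. apply pow_incr. lra.
          * unfold W. apply pow_incr. lra.
          * apply HVM; lra.
          * assert (Habs : Rabs (y - x (S j)) <= h) by (apply Rabs_le; lra).
            rewrite <- (pow2_abs (y - x (S j))). apply pow_incr. split; auto. apply Rabs_pos. }
      lra. }
  rewrite <- Hxm. apply IND. lia.
Qed.

Lemma sumk_ext k f g : (forall i, (i < k)%nat -> f i = g i) -> sumk k f = sumk k g.
Proof. induction k; intros H; simpl; auto. rewrite IHk, H; auto; intros; apply H; lia. Qed.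

Lemma sumk_lin k a b f g : sumk k (fun i => a * f i + b * g i) = a * sumk k f + b * sumk k g.
Proof. induction k; simpl. ring. rewrite IHk. ring. Qed.

Definition sh (i0 i : nat) : nat := if (i <? i0)%nat then i else S i.
Definition unsh (i0 i : nat) : nat := if (i <? i0)%nat then i else (i - 1)%nat.

Lemma sumk_del k i0 f : (i0 < k)%nat -> sumk k f = f i0 + sumk (k - 1) (fun i => f (sh i0 i)).
Proof.
  induction k; intro H. lia.
  destruct (Nat.eq_dec i0 k) as [->|Hne].
  - simpl. replace (k - 0)%nat with k by lia.
    rewrite (sumk_ext k (fun i => f (sh k i)) f). ring.
    intros i Hi. unfold sh. destruct (Nat.ltb_spec i k); auto; lia.
  - change (sumk (S k) f) with (sumk k f + f k). rewrite IHk by lia. destruct k. lia.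
    replace (S (S k) - 1)%nat with (S k) by lia. replace (S k - 1)%nat with k by lia. simpl.
    replace (sh i0 k) with (S k). ring. unfold sh. destruct (Nat.ltb_spec k i0); auto; lia.
Qed.

Lemma kernel m : forall k (A : nat -> nat -> R), (m < k)%nat ->
  exists c : nat -> R, (exists i, (i < k)%nat /\ c i <> 0) /\
    forall j, (j < m)%nat -> sumk k (fun i => c i * A j i) = 0.
Proof.
  induction m; intros k A Hk.
  - exists (fun _ => 1). split. exists 0%nat. split. lia. lra. intros; lia.
  - destruct (classic (exists i, (i < k)%nat /\ A m i <> 0)) as [[i0 [Hi0 Ha]]|Hno].
    + set (a := A m i0).
      set (B := fun j i => a * A j (sh i0 i) - A m (sh i0 i) * A j i0).
      destruct (IHm (k - 1)%nat B ltac:(lia)) as [d [[i1 [Hi1 Hd]] Hrow]].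
      set (S0 := sumk (k - 1) (fun i => d i * A m (sh i0 i))).
      set (t := - S0 / a).
      set (c := fun i => if (i =? i0)%nat then t else d (unsh i0 i)).
      assert (Csh : forall i, c (sh i0 i) = d i).
      { intro i. unfold c, sh, unsh. destruct (Nat.ltb_spec i i0).
        - destruct (Nat.eqb_spec i i0). lia. destruct (Nat.ltb_spec i i0); auto; lia.
        - destruct (Nat.eqb_spec (S i) i0). lia. destruct (Nat.ltb_spec (S i) i0). lia. f_equal; lia. }
      assert (C0 : c i0 = t) by (unfold c; rewrite Nat.eqb_refl; auto).
      assert (Row : forall j, sumk k (fun i => c i * A j i) = t * A j i0 + sumk (k - 1) (fun i => d i * A j (sh i0 i))).
      { intro j. rewrite (sumk_del k i0) by lia. rewrite C0. f_equal.
        apply sumk_ext. intros i _. rewrite Csh; auto. }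
      exists c. split.
      * exists (sh i0 i1). split. unfold sh; destruct (Nat.ltb_spec i1 i0); lia. rewrite Csh; auto.
      * intros j Hj. rewrite Row. destruct (Nat.eq_dec j m) as [->|Hjm].
        -- fold S0. fold a. unfold t. field. auto.
        -- assert (Hr := Hrow j ltac:(lia)). unfold B in Hr.
           rewrite (sumk_ext _ _ (fun i => a * (d i * A j (sh i0 i)) + (- A j i0) * (d i * A m (sh i0 i)))) in Hr
             by (intros; ring).
           rewrite sumk_lin in Hr. fold S0 in Hr. unfold t.
           apply (Rmult_eq_reg_l a); auto. field_simplify; auto. lra.
    + destruct (IHm k A ltac:(lia)) as [c [Hc Hrow]]. exists c. split; auto.
      intros j Hj. destruct (Nat.eq_dec j m) as [->|Hjm].
      * rewrite (sumk_ext _ _ (fun i => 0 * 0)). clear. induction k; simpl; auto; lra.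
        intros i Hi. destruct (Req_dec (A m i) 0) as [E|E]. rewrite E; ring.
        exfalso; apply Hno; eauto.
      * apply Hrow; lia.
Qed.

Lemma alg_fin (Nr s th : R) : 11 <= Nr -> 0 <= s -> s ^ 2 = Nr - 1 -> 0 < th ->
  th < (Nr - 4 - 2 * s) / 2 -> (th + 2) * (Nr - 2 - th) < ((Nr - 2) / 2) ^ 2.
Proof.
  intros H1 H2 H3 H4 H5.
  assert (s < (Nr - 4) / 2) by nra.
  assert (E : ((Nr - 2) / 2) ^ 2 - (th + 2) * (Nr - 2 - th) =
     (th - (Nr - 4 - 2 * s) / 2) * (th - ((Nr - 4) / 2 + s))) by (field_simplify; nra).
  assert (0 < (th - (Nr - 4 - 2 * s) / 2) * (th - ((Nr - 4) / 2 + s))) by nra. lra.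
Qed.

Lemma alg_inf (Nr s th : R) : 3 <= Nr -> 0 <= s -> s ^ 2 = Nr - 1 -> 0 < th -> th < (Nr - 2) / 2 ->
  (Nr - 4 - 2 * s) / 2 < th -> ((Nr - 2) / 2) ^ 2 < (th + 2) * (Nr - 2 - th).
Proof.
  intros H1 H2 H3 H4 H5 H6.
  assert (1 < s) by nra.
  assert (E : ((Nr - 2) / 2) ^ 2 - (th + 2) * (Nr - 2 - th) =
     (th - (Nr - 4 - 2 * s) / 2) * (th - ((Nr - 4) / 2 + s))) by (field_simplify; nra).
  assert ((th - (Nr - 4 - 2 * s) / 2) * (th - ((Nr - 4) / 2 + s)) < 0) by nra. lra.
Qed.

Lemma small_N (Nr s : R) : 3 <= Nr <= 10 -> 0 <= s -> s ^ 2 = Nr - 1 -> (Nr - 4 - 2 * s) / 2 <= 0.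
Proof. intros. nra. Qed.

Lemma Rpower_pos x y : 0 < Rpower x y.
Proof. unfold Rpower. apply exp_pos. Qed.

Lemma params N p : (3 <= N)%nat -> p_S N < p ->
  1 < p /\ 0 < theta p /\ theta p < (INR N - 2) / 2 /\ p * theta p = theta p + 2.
Proof.
  intros HN Hp. unfold p_S in Hp. apply le_INR in HN. simpl in HN.
  assert (H1 : (INR N + 2) / (INR N - 2) = 1 + 4 / (INR N - 2)) by (field; lra).
  rewrite H1 in Hp. assert (0 < 4 / (INR N - 2)) by (apply Rdiv_lt_0_compat; lra).
  assert (Hp1 : 1 < p) by lra. unfold theta.
  split; auto. split. apply Rdiv_lt_0_compat; lra. split.
  - apply (Rmult_lt_reg_r (p - 1)). lra. replace (2 / (p - 1) * (p - 1)) with 2 by (field; lra).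
    assert (4 / (INR N - 2) * (INR N - 2) < (p - 1) * (INR N - 2)) by (apply Rmult_lt_compat_r; lra).
    replace (4 / (INR N - 2) * (INR N - 2)) with 4 in H0 by (field; lra). nra.
  - field. lra.
Qed.

Lemma usol_cont N p u : singular_solution N p u -> forall r, 0 < r -> continuous u r /\ 0 < u r.
Proof. intros [H1 [H2 _]] r Hr. split. apply exd_cont, H2; auto. auto. Qed.

Lemma asym N p u : singular_solution N p u -> 1 < p ->
  forall eps, 0 < eps -> exists rho, 0 < rho /\ forall r, 0 < r < rho ->
    Rabs (p * Rpower (u r) (p - 1) * r ^ 2 - p * Rpower (A_pN p N) (p - 1)) < eps.
Proof.
  intros [Hpos [_ Hlim]] Hp eps Heps.
  set (g := fun y => p * Rpower y (p - 1)).
  assert (Hg : filterlim g (locally (A_pN p N)) (locally (g (A_pN p N)))).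
  { apply (continuous_mult (fun _ => p) (fun y => Rpower y (p - 1))). apply continuous_const.
    apply Rpower_cont. apply Rpower_pos. }
  assert (Hc := filterlim_comp _ _ _ _ _ _ _ _ Hlim Hg).
  assert (Hc' : @filterlim R R (fun x => g (Rpower x (theta p) * u x)) (at_right 0) (@locally R_UniformSpace (g (A_pN p N)))) by exact Hc.
  clear Hc. rename Hc' into Hc. destruct (proj1 (@filterlim_locally R R_UniformSpace (at_right 0) _ (fun x => g (Rpower x (theta p) * u x)) (g (A_pN p N))) Hc (mkposreal eps Heps)) as [d Hd].
  exists d. split. apply cond_pos. intros r [Hr1 Hr2].
  assert (B : ball 0 d r). { apply Rabs_lt_between. split; simpl; unfold minus, plus, opp; simpl; lra. }
  specialize (Hd r B Hr1). unfold ball in Hd; simpl in Hd. unfold AbsRing_ball, abs, minus, plus, opp in Hd; simpl in Hd.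
  unfold g in Hd.
  replace (Rpower (Rpower r (theta p) * u r) (p - 1)) with (r ^ 2 * Rpower (u r) (p - 1)) in Hd.
  replace (p * Rpower (u r) (p - 1) * r ^ 2) with (p * (r ^ 2 * Rpower (u r) (p - 1))) by ring. exact Hd.
  rewrite <- Rpower_mult_distr; [| apply Rpower_pos | apply Hpos; auto].
  rewrite Rpower_mult. replace (theta p * (p - 1)) with (INR 2) by (unfold theta; simpl; field; lra).
  rewrite Rpower_pow; auto.
Qed.

Lemma finite_part N p u R0 : (3 <= N)%nat -> 0 < R0 -> p_S N < p -> singular_solution N p u ->
  p * Rpower (A_pN p N) (p - 1) < ((INR N - 2) / 2) ^ 2 -> morse_index_finite N p u R0.
Proof.
  intros HN HR Hp Hs HL.
  destruct (params N p HN Hp) as [Hp1 _].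
  destruct N as [|[|[|n]]]; try lia.
  replace (INR (S (S (S n))) - 2) with (INR (n + 1)) in HL
    by (rewrite !S_INR, plus_INR; simpl; ring).
  set (L := p * Rpower (A_pN p (S (S (S n)))) (p - 1)) in *.
  destruct (asym _ _ _ Hs Hp1 ((INR (n + 1) / 2) ^ 2 - L) ltac:(lra)) as [r1 [Hr1 Hasy]].
  set (rho := Rmin (r1 / 2) (R0 / 2)).
  assert (Hrho : 0 < rho < R0).
  { unfold rho. split. apply Rmin_pos; lra. apply Rle_lt_trans with (R0/2). apply Rmin_r. lra. }
  assert (Hrho1 : rho < r1) by (unfold rho; apply Rle_lt_trans with (r1/2); [apply Rmin_l|lra]).
  set (V := fun r => p * Rpower (u r) (p - 1)).
  assert (Hcu := usol_cont _ _ _ Hs).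
  destruct (continuity_ab_maj V rho R0) as [Mx [HMx _]]. lra.
  { intros c Hc. apply cR. unfold V. apply (continuous_mult (fun _ => p) (fun y => Rpower (u y) (p - 1))).
    apply continuous_const. apply (continuous_comp u (fun z => Rpower z (p - 1))). apply Hcu; lra.
    apply Rpower_cont. apply Hcu; lra. }
  destruct (finite_core n p u rho R0 (Rmax 0 (V Mx)) Hcu Hrho) as [m [Hm Hcore]].
  apply Rmax_l.
  { intros r Hr. eapply Rle_trans. apply (HMx r Hr). apply Rmax_r. }
  { intros r Hr. specialize (Hasy r ltac:(lra)). apply Rabs_lt_between in Hasy. unfold L in *. lra. }
  exists m. intros k [phi [Hphi Hneg]].
  destruct (Compare_dec.le_lt_dec k m) as [Hkm|Hkm]; auto. exfalso.
  set (h := (R0 - rho) / INR m).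
  destruct (kernel m k (fun j i => phi i (rho + INR j * h)) Hkm) as [c [Hc Hrow]].
  specialize (Hneg c Hc).
  assert (G := good_lincomb k c phi (fun i Hi => test_good _ (Hphi i Hi))).
  destruct G as [G _].
  assert (0 <= Qform (S (S (S n))) p u R0 (lincomb k c phi)).
  { rewrite Qform_Fint. apply Hcore; auto. intros j Hj. rewrite lincomb_sumk. apply Hrow; auto. }
  lra.
Qed.

Definition hmax (x : R) : R := Rmax 0 x ^ 2.
Definition hmax' (x : R) : R := 2 * Rmax 0 x.

Lemma Rmax0_abs x : Rmax 0 x = (x + Rabs x) / 2.
Proof. unfold Rmax. destruct (Rle_dec 0 x). rewrite Rabs_right; lra. rewrite Rabs_left; lra. Qed.

Lemma hmax'_cont x : continuous hmax' x.
Proof.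
  apply (continuous_ext (fun y => 2 * ((y + Rabs y) / 2))). intro y. unfold hmax'. rewrite Rmax0_abs. reflexivity.
  apply c_mult. apply c_const. apply c_mult. apply c_plus. apply c_id. apply continuous_Rabs. apply c_const.
Qed.

Lemma hmax_der x : is_derive hmax x (hmax' x).
Proof.
  destruct (Rtotal_order x 0) as [H|[H|H]].
  - unfold hmax'. rewrite Rmax_left by lra. replace (2 * 0) with (@zero R_AbsRing) by (unfold zero; simpl; ring).
    eapply is_derive_ext_loc; [| apply (is_derive_const 0 x)].
    apply (locally_interval _ x m_infty (Finite 0)); simpl; auto. intros y _ Hy.
    unfold hmax. rewrite Rmax_left by lra. simpl; ring.
  - subst. apply is_derive_Reals. unfold hmax'. rewrite Rmax_left by lra.
    intros eps Heps. exists (mkposreal eps Heps). intros h Hh0 Hh. simpl in Hh.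
    unfold hmax. rewrite Rplus_0_l. rewrite (Rmax_left 0 0) by lra.
    unfold Rmax. destruct (Rle_dec 0 h).
    + replace ((h ^ 2 - 0 ^ 2) / h - 2 * 0) with h by (field; auto). rewrite Rabs_right by lra. pose proof (RRle_abs h). lra.
    + replace ((0 ^ 2 - 0 ^ 2) / h - 2 * 0) with 0 by (field; auto). rewrite Rabs_R0; lra.
  - unfold hmax'. rewrite Rmax_right by lra.
    eapply is_derive_ext_loc; [| eapply isd_eq; [apply (isd_sq (fun y => y)); apply (is_derive_id x) | unfold one; simpl; ring]].
    apply (locally_interval _ x (Finite 0) p_infty); simpl; auto. intros y Hy _.
    unfold hmax. rewrite Rmax_right by lra. auto.
Qed.

Definition gT (T L t : R) : R := (t - T) * (T + L - t).
Definition gT' (T L t : R) : R := T + L - t - (t - T).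
Definition phiT (al T L r : R) : R := Rpower r (- al) * hmax (gT T L (ln r)).
Definition dphiT (al T L r : R) : R :=
  Rpower r (- al) * (hmax' (gT T L (ln r)) * gT' T L (ln r) - al * hmax (gT T L (ln r))) / r.

Lemma ln_nonpos x : x <= 0 -> ln x = 0.
Proof. intro H. unfold ln. destruct (Rlt_dec 0 x) as [h|h]. exfalso; apply (Rlt_not_le x 0 h H). reflexivity. Qed.

Lemma c_inv (f : R -> R) x : f x <> 0 -> continuous f x -> continuous (fun y => / f y) x.
Proof. intros. apply cR. apply continuity_pt_inv; auto. apply cR; auto. Qed.

Lemma ln_der r : 0 < r -> is_derive ln r (/ r).
Proof. intro. apply is_derive_Reals, derivable_pt_lim_ln; auto. Qed.

Lemma ln_cont r : 0 < r -> continuous ln r.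
Proof. intro. apply exd_cont. eexists; apply ln_der; auto. Qed.

Lemma gT_der T L t : is_derive (gT T L) t (gT' T L t).
Proof. unfold gT, gT'. auto_derive. auto. ring. Qed.

Lemma gln_der T L r : 0 < r -> is_derive (fun y => gT T L (ln y)) r (gT' T L (ln r) * / r).
Proof. intro. apply (isd_comp (gT T L) ln). apply gT_der. apply ln_der; auto. Qed.

Lemma phiT_der al T L r : 0 < r -> is_derive (phiT al T L) r (dphiT al T L r).
Proof.
  intro Hr. unfold phiT, dphiT.
  eapply isd_eq. apply isd_mult. apply Rpower_derive; auto.
  apply (isd_comp hmax (fun y => gT T L (ln y))). apply hmax_der. apply gln_der; auto.
  assert (E : Rpower r (- al - 1) = Rpower r (- al) / r).
  { replace (- al - 1) with (- al + - (1)) by ring. rewrite Rpower_plus. rewrite (Rpower_Ropp r 1), Rpower_1 by auto. reflexivity. }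
  rewrite E. match goal with |- ?a = ?b => change (@eq R a b) end. field. lra.
Qed.

Lemma hmax_neg x : x <= 0 -> hmax x = 0 /\ hmax' x = 0.
Proof. intro. unfold hmax, hmax'. rewrite Rmax_left by lra. split; ring. Qed.

Lemma phiT_vanish al T L r : 0 < r -> gT T L (ln r) <= 0 -> phiT al T L r = 0 /\ dphiT al T L r = 0.
Proof.
  intros Hr Hg. destruct (hmax_neg _ Hg) as [H1 H2]. unfold phiT, dphiT. rewrite H1, H2. split. ring. field. lra.
Qed.

Lemma phiT_test al T L : 0 < L -> T + L <= 0 -> radial_test_fun (phiT al T L).
Proof.
  intros HL HTL. split.
  - intros r Hr. split. eexists; apply phiT_der; auto.
    apply (continuous_ext_loc _ (dphiT al T L)).
    { apply (locally_interval _ r (Finite 0) p_infty); simpl; auto. intros y Hy _.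
      symmetry; apply is_derive_unique, phiT_der; auto. }
    unfold dphiT. apply c_mult. apply c_mult. apply Rpower_cont; auto.
    apply c_minus. apply c_mult.
    apply (continuous_comp (fun y => gT T L (ln y)) hmax'). apply exd_cont. eexists; apply gln_der; auto. apply hmax'_cont.
    apply (continuous_comp ln (gT' T L)). apply ln_cont; auto. unfold gT'. apply c_minus. apply c_minus. apply c_const. apply c_id. apply c_minus. apply c_id. apply c_const.
    apply c_mult. apply c_const.
    apply (continuous_comp (fun y => gT T L (ln y)) hmax). apply exd_cont. eexists; apply gln_der; auto. apply exd_cont. eexists; apply hmax_der.
    apply c_inv. lra. apply c_id.
  - exists (exp T). split. apply exp_pos. intros r Hr.
    destruct (Rle_or_lt r 0) as [H0|H0].
    + unfold phiT. rewrite ln_nonpos by auto.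
      assert (Hg : gT T L 0 <= 0) by (unfold gT; assert (T < 0) by lra; nra).
      rewrite (proj1 (hmax_neg _ Hg)). ring.
    + apply phiT_vanish; auto. assert (ln r < T). { rewrite <- (ln_exp T). apply ln_increasing; auto. }
      unfold gT. nra.
Qed.

Definition ps (L s : R) := s ^ 2 * (L - s) ^ 2.
Definition ps' (L s : R) := 2 * s * (L - s) * (L - 2 * s).
Definition P1 (L s : R) := 4 * L ^ 4 * s ^ 3 / 3 - 6 * L ^ 3 * s ^ 4 + 52 * L ^ 2 * s ^ 5 / 5 - 8 * L * s ^ 6 + 16 * s ^ 7 / 7.
Definition P2 (L s : R) := L ^ 4 * s ^ 5 / 5 - 2 * L ^ 3 * s ^ 6 / 3 + 6 * L ^ 2 * s ^ 7 / 7 - L * s ^ 8 / 2 + s ^ 9 / 9.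
Definition Kp (L al be s : R) := ps' L s ^ 2 - 2 * al * ps L s * ps' L s - be / 2 * ps L s ^ 2.
Definition Hp (L al be s : R) := P1 L s - al * ps L s ^ 2 - be / 2 * P2 L s.

Lemma Hp_der L al be s : is_derive (Hp L al be) s (Kp L al be s).
Proof. unfold Hp, Kp, P1, P2, ps, ps'. auto_derive. auto. field. Qed.

Lemma Kp_cont L al be s : continuous (Kp L al be) s.
Proof. apply exd_cont. unfold Kp, ps, ps'. auto_derive. auto. Qed.

Lemma Hp_val L al be : Hp L al be L - Hp L al be 0 = 2 * L ^ 7 / 105 - be / 2 * L ^ 9 / 630.
Proof. unfold Hp, P1, P2, ps. field. Qed.

Lemma F_le_K (E w y X Y V c2 al be : R) : 0 < y -> E ^ 2 * w = y -> c2 <= V * y ^ 2 -> y ^ 2 <= be / 2 ->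
  be = c2 - al ^ 2 ->
  ((E * (X - al * Y) / y) ^ 2 + (E * Y) ^ 2 - V * (E * Y) ^ 2) * w <= (X ^ 2 - 2 * al * Y * X - be / 2 * Y ^ 2) / y.
Proof.
  intros Hy HE HV Hb Hbe.
  replace (((E * (X - al * Y) / y) ^ 2 + (E * Y) ^ 2 - V * (E * Y) ^ 2) * w)
    with ((E ^ 2 * w) * ((X - al * Y) ^ 2 / y ^ 2 + Y ^ 2 - V * Y ^ 2)) by (field; lra).
  rewrite HE.
  assert (D : (X ^ 2 - 2 * al * Y * X - be / 2 * Y ^ 2) / y - y * ((X - al * Y) ^ 2 / y ^ 2 + Y ^ 2 - V * Y ^ 2)
     = Y ^ 2 / y * (V * y ^ 2 - al ^ 2 - be / 2 - y ^ 2)) by (field; lra).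
  assert (0 <= Y ^ 2 / y * (V * y ^ 2 - al ^ 2 - be / 2 - y ^ 2)).
  { apply Rmult_le_pos. apply Rmult_le_pos. apply pow2_ge_0. left; apply Rinv_0_lt_compat; auto. lra. }
  lra.
Qed.

Lemma E2w n y : 0 < y -> Rpower y (- (INR (n + 1) / 2)) ^ 2 * y ^ (S (S n)) = y.
Proof.
  intro Hy. rewrite <- (Rpower_pow (S (S n)) y Hy). simpl pow. rewrite Rmult_1_r.
  rewrite <- !Rpower_plus. replace (INR (S (S n))) with (INR (n + 1) + 1) by (rewrite plus_INR, !S_INR; simpl; ring).
  replace (- (INR (n + 1) / 2) + - (INR (n + 1) / 2) + (INR (n + 1) + 1)) with 1 by field.
  apply Rpower_1; auto.
Qed.

Lemma RInt_zero_on (f : R -> R) a b : a <= b -> (forall y, a < y < b -> f y = 0) -> RInt f a b = 0.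
Proof.
  intros Hab H. rewrite (RInt_ext f (fun _ => 0)). rewrite RInt_const. unfold scal; simpl; unfold mult; simpl; ring.
  intros y Hy. rewrite Rmin_left, Rmax_right in Hy by auto. auto.
Qed.

Lemma Q_neg n p v R0 c2 rho T L :
  (forall r, 0 < r -> continuous v r /\ 0 < v r) ->
  (INR (n + 1) / 2) ^ 2 < c2 -> 0 < rho ->
  (forall r, 0 < r < rho -> c2 <= p * Rpower (v r) (p - 1) * r ^ 2) ->
  0 < L -> 24 / (c2 - (INR (n + 1) / 2) ^ 2) < L ^ 2 -> exp (T + L) < rho -> exp (T + L) <= R0 ->
  exp (T + L) ^ 2 <= (c2 - (INR (n + 1) / 2) ^ 2) / 2 -> T + L <= 0 ->
  Qform (S (S (S n))) p v R0 (phiT (INR (n + 1) / 2) T L) < 0.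
Proof.
  intros Hv Hc2 Hrho HV HL HL2 Hb1 Hb2 Hb3 HTL.
  set (al := INR (n + 1) / 2) in *. set (be := c2 - al ^ 2) in *.
  assert (Hbe : 0 < be) by (unfold be; lra).
  set (phi := phiT al T L).
  assert (Gp : good phi) by (apply test_good, phiT_test; auto).
  set (F := Fint (S (S (S n))) p v phi).
  remember (exp T) as a eqn:Ea. remember (exp (T + L)) as b eqn:Eb.
  assert (Ha : 0 < a) by (rewrite Ea; apply exp_pos). assert (Hb0 : 0 < b) by (rewrite Eb; apply exp_pos).
  assert (Hab : a < b) by (rewrite Ea, Eb; apply exp_increasing; lra).
  assert (Ex : forall x y, 0 <= x -> 0 <= y -> ex_RInt F x y) by (intros; apply Fint_ex; auto).
  rewrite Qform_Fint. fold phi. fold F.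
  rewrite <- (RInt_Chasles F 0 a R0) by (apply Ex; lra).
  rewrite <- (RInt_Chasles F a b R0) by (apply Ex; lra).
  assert (Fz : forall y, 0 < y -> gT T L (ln y) <= 0 -> F y = 0).
  { intros y Hy Hg. destruct (phiT_vanish al T L y Hy Hg) as [V1 V2]. unfold F, Fint, phi.
    rewrite (is_derive_unique _ _ _ (phiT_der al T L y Hy)). rewrite V2. rewrite V1. ring. }
  assert (Z1 : RInt F 0 a = 0).
  { apply RInt_zero_on. lra. intros y Hy. apply Fz. lra.
    assert (ln y < T) by (rewrite <- (ln_exp T); apply ln_increasing; lra). unfold gT; nra. }
  assert (Z2 : RInt F b R0 = 0).
  { apply RInt_zero_on. lra. intros y Hy. apply Fz. lra.
    assert (T + L < ln y) by (rewrite <- (ln_exp (T + L)); apply ln_increasing; lra). unfold gT; nra. }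
  rewrite Z1, Z2.
  set (K := fun r => Kp L al be (ln r - T) * / r).
  assert (IK : is_RInt K a b (minus (Hp L al be (ln b - T)) (Hp L al be (ln a - T)))).
  { apply (is_RInt_derive (fun r => Hp L al be (ln r - T))); rewrite Rmin_left, Rmax_right by lra; intros x Hx.
    - apply (isd_comp (Hp L al be) (fun r => ln r - T)). apply Hp_der.
      eapply isd_eq. apply (isd_plus ln (fun _ => - T)). apply ln_der; lra. apply is_derive_const. unfold zero; simpl; ring.
    - unfold K. apply c_mult. apply (continuous_comp (fun r => ln r - T) (Kp L al be)).
      apply c_minus. apply ln_cont; lra. apply c_const. apply Kp_cont.
      apply c_inv. lra. apply c_id. }
  assert (Hle : RInt F a b <= RInt K a b).
  { apply RInt_le. lra. apply Ex; lra. eexists; eauto.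
    intros y Hy. assert (Hy0 : 0 < y) by lra.
    assert (Hs1 : T < ln y) by (rewrite <- (ln_exp T); apply ln_increasing; lra).
    assert (Hs2 : ln y < T + L) by (rewrite <- (ln_exp (T + L)); apply ln_increasing; lra).
    set (s := ln y - T).
    assert (Hg : gT T L (ln y) = s * (L - s)) by (unfold gT, s; ring).
    assert (Hgp : 0 < gT T L (ln y)) by (rewrite Hg; unfold s; nra).
    assert (HY : hmax (gT T L (ln y)) = ps L s) by (unfold hmax, ps; rewrite Rmax_right by lra; rewrite Hg; ring).
    assert (HX : hmax' (gT T L (ln y)) * gT' T L (ln y) = ps' L s).
    { unfold hmax', ps'. rewrite Rmax_right by lra. rewrite Hg. unfold gT', s. ring. }
    unfold F, Fint, phi. rewrite (is_derive_unique _ _ _ (phiT_der al T L y Hy0)).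
    unfold dphiT, phiT. rewrite HX, HY. unfold K, Kp. fold s.
    replace (S (S (S n)) - 1)%nat with (S (S n)) by lia.
    replace ((ps' L s ^ 2 - 2 * al * ps L s * ps' L s - be / 2 * ps L s ^ 2) * / y)
      with ((ps' L s ^ 2 - 2 * al * ps L s * ps' L s - be / 2 * ps L s ^ 2) / y) by reflexivity.
    apply (F_le_K _ _ _ _ _ _ c2).
    exact Hy0. apply E2w; auto. apply HV; lra.
    apply Rle_trans with (b ^ 2); auto. apply pow_incr; lra. reflexivity. }
  rewrite (is_RInt_unique _ _ _ _ IK) in Hle.
  unfold minus, plus, opp in Hle; simpl in Hle.
  rewrite Ea, Eb, !ln_exp in Hle.
  replace (T + L - T) with L in Hle by ring. replace (T - T) with 0 in Hle by ring.
  replace (Hp L al be L + - Hp L al be 0) with (Hp L al be L - Hp L al be 0) in Hle by ring.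
  rewrite Hp_val in Hle.
  assert (Hneg : 2 * L ^ 7 / 105 - be / 2 * L ^ 9 / 630 < 0).
  { assert (24 < be * L ^ 2).
    { apply (Rmult_lt_reg_l (/ be)). apply Rinv_0_lt_compat; auto.
      replace (/ be * (be * L ^ 2)) with (L ^ 2) by (field; lra). unfold Rdiv in HL2. lra. }
    assert (0 < L ^ 7) by (apply pow_lt; auto).
    replace (2 * L ^ 7 / 105 - be / 2 * L ^ 9 / 630) with (L ^ 7 * (24 - be * L ^ 2) / 1260) by (simpl; field).
    assert (L ^ 7 * (24 - be * L ^ 2) < 0) by nra. lra. }
  unfold plus; simpl. rewrite Ea, Eb. lra.
Qed.

Lemma sumk_mult_r k f a : sumk k f * a = sumk k (fun i => f i * a).
Proof. induction k; simpl. ring. rewrite <- IHk. ring. Qed.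

Lemma sumk_sq k x : (forall i j, (i < k)%nat -> (j < k)%nat -> i <> j -> x i * x j = 0) ->
  (sumk k x) ^ 2 = sumk k (fun i => x i ^ 2).
Proof.
  induction k; intro H. simpl; ring.
  change (sumk (S k) x) with (sumk k x + x k).
  change (sumk (S k) (fun i => x i ^ 2)) with (sumk k (fun i => x i ^ 2) + x k ^ 2).
  rewrite <- IHk by (intros; apply H; lia).
  assert (Z : sumk k x * x k = 0).
  { rewrite sumk_mult_r. rewrite (sumk_ext _ _ (fun _ => 0 * 0)). clear. induction k; simpl; lra.
    intros i Hi. rewrite H by lia. ring. }
  replace ((sumk k x + x k) ^ 2) with (sumk k x ^ 2 + 2 * (sumk k x * x k) + x k ^ 2) by ring.
  rewrite Z. ring.
Qed.

Lemma sumk_F k d A B V w : sumk k (fun i => d i * ((A i + B i - V * B i) * w)) =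
  (sumk k (fun i => d i * A i) + sumk k (fun i => d i * B i) - V * sumk k (fun i => d i * B i)) * w.
Proof. induction k; simpl. ring. rewrite IHk. ring. Qed.

Lemma RInt_sumk k d (f : nat -> R -> R) a b : (forall i, (i < k)%nat -> ex_RInt (f i) a b) ->
  ex_RInt (fun y => sumk k (fun i => d i * f i y)) a b /\
  RInt (fun y => sumk k (fun i => d i * f i y)) a b = sumk k (fun i => d i * RInt (f i) a b).
Proof.
  induction k; intro H.
  - simpl. split. apply (ex_RInt_const a b 0). rewrite RInt_const. unfold scal; simpl; unfold mult; simpl; ring.
  - destruct IHk as [E1 E2]. intros; apply H; lia.
    assert (E3 : ex_RInt (fun y => d k * f k y) a b) by (apply (ex_RInt_scal (f k)); apply H; lia).
    simpl. split.
    + apply (ex_RInt_plus (fun y => sumk k (fun i => d i * f i y)) (fun y => d k * f k y)); auto.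
    + rewrite (RInt_plus (fun y => sumk k (fun i => d i * f i y)) (fun y => d k * f k y)); auto.
      rewrite E2. rewrite (RInt_scal (f k)) by (apply H; lia). reflexivity.
Qed.

Lemma sumk_neg k c q : (forall i, (i < k)%nat -> q i < 0) ->
  sumk k (fun i => c i ^ 2 * q i) <= 0 /\ ((exists i, (i < k)%nat /\ c i <> 0) -> sumk k (fun i => c i ^ 2 * q i) < 0).
Proof.
  induction k; intro H.
  - simpl. split. lra. intros [i [Hi _]]; lia.
  - destruct IHk as [I1 I2]. intros; apply H; lia.
    change (sumk (S k) (fun i => c i ^ 2 * q i)) with (sumk k (fun i => c i ^ 2 * q i) + c k ^ 2 * q k).
    assert (Hq := H k ltac:(lia)).
    assert (0 <= c k ^ 2) by apply pow2_ge_0.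
    assert (c k ^ 2 * q k <= 0) by nra.
    split. lra. intros [i [Hi Hc]].
    destruct (Nat.eq_dec i k) as [->|Hne].
    + assert (0 < c k ^ 2) by (apply pow2_gt_0; auto). assert (c k ^ 2 * q k < 0) by nra. lra.
    + assert (sumk k (fun i => c i ^ 2 * q i) < 0) by (apply I2; exists i; split; auto; lia). lra.
Qed.

Lemma gT_pos T L t : 0 < L -> 0 < gT T L t -> T < t < T + L.
Proof. unfold gT. intros. destruct (Rlt_or_le t T); destruct (Rlt_or_le (T + L) t); nra. Qed.

Lemma infinite_part N p u R0 : (3 <= N)%nat -> 0 < R0 -> p_S N < p -> singular_solution N p u ->
  ((INR N - 2) / 2) ^ 2 < p * Rpower (A_pN p N) (p - 1) -> morse_index_infinite N p u R0.
Proof.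
  intros HN HR Hp Hs HL.
  destruct (params N p HN Hp) as [Hp1 _].
  destruct N as [|[|[|n]]]; try lia.
  replace (INR (S (S (S n))) - 2) with (INR (n + 1)) in HL
    by (rewrite !S_INR, plus_INR; simpl; ring).
  remember (p * Rpower (A_pN p (S (S (S n)))) (p - 1)) as Lv eqn:ELv.
  remember (INR (n + 1) / 2) as al eqn:Eal.
  remember ((al ^ 2 + Lv) / 2) as c2 eqn:Ec2.
  destruct (asym _ _ _ Hs Hp1 (Lv - c2) ltac:(lra)) as [rho [Hrho Hasy]].
  assert (HV : forall r, 0 < r < rho -> c2 <= p * Rpower (u r) (p - 1) * r ^ 2).
  { intros r Hr. specialize (Hasy r Hr). apply Rabs_lt_between in Hasy. rewrite <- ELv in Hasy. lra. }
  remember (c2 - al ^ 2) as be eqn:Ebe.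
  assert (Hbe : 0 < be) by lra.
  remember (24 / be + 1) as L eqn:EL.
  assert (H24 : 0 < 24 / be) by (apply Rdiv_lt_0_compat; lra).
  assert (HL0 : 0 < L) by lra.
  assert (HL2 : 24 / be < L ^ 2) by nra.
  remember (Rmin (Rmin (rho / 2) R0) (Rmin (sqrt (be / 2)) (1 / 2))) as b0 eqn:Eb0.
  assert (Hb0 : 0 < b0).
  { rewrite Eb0. apply Rmin_pos; apply Rmin_pos; try lra. apply sqrt_lt_R0; lra. }
  assert (Hb0a : b0 <= rho / 2) by (rewrite Eb0; eapply Rle_trans; [apply Rmin_l|apply Rmin_l]).
  assert (Hb0b : b0 <= R0) by (rewrite Eb0; eapply Rle_trans; [apply Rmin_l|apply Rmin_r]).
  assert (Hb0c : b0 <= sqrt (be / 2)) by (rewrite Eb0; eapply Rle_trans; [apply Rmin_r|apply Rmin_l]).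
  assert (Hb0d : b0 <= 1 / 2) by (rewrite Eb0; eapply Rle_trans; [apply Rmin_r|apply Rmin_r]).
  assert (Hb0e : b0 ^ 2 <= be / 2).
  { rewrite <- (sqrt_sqrt (be / 2)) by lra. simpl. rewrite Rmult_1_r. apply Rmult_le_compat; lra. }
  assert (Hlnb : ln b0 < 0). { rewrite <- ln_1. apply ln_increasing; lra. }
  set (T := fun i : nat => ln b0 - L - INR i * (L + 1)).
  assert (HT : forall i, exp (T i + L) <= b0).
  { intro i. rewrite <- (exp_ln b0) by auto. unfold T.
    assert (0 <= INR i) by apply pos_INR.
    destruct (Req_dec (INR i) 0) as [E|E].
    - rewrite E. right. f_equal. ring.
    - left. apply exp_increasing. nra. }
  assert (HTL : forall i, T i + L <= 0).
  { intro i. unfold T. assert (0 <= INR i) by apply pos_INR. nra. }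
  set (phi := fun i => phiT al (T i) L).
  assert (Htest : forall i, radial_test_fun (phi i)) by (intro i; apply phiT_test; auto).
  assert (Hgood : forall i, good (phi i)) by (intro i; apply test_good; auto).
  assert (Hcu := usol_cont _ _ _ Hs).
  assert (Hneg : forall i, Qform (S (S (S n))) p u R0 (phi i) < 0).
  { intro i. unfold phi. rewrite Eal. apply (Q_neg n p u R0 c2 rho (T i) L); auto.
    - rewrite <- Eal. lra.
    - rewrite <- Eal, <- Ebe. auto.
    - pose proof (HT i). lra.
    - pose proof (HT i). lra.
    - rewrite <- Eal, <- Ebe. pose proof (HT i). assert (0 < exp (T i + L)) by apply exp_pos.
      apply Rle_trans with (b0 ^ 2); auto. apply pow_incr; lra. }
  assert (Hdisj : forall i j y, (i < j)%nat -> 0 < y ->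
     gT (T i) L (ln y) <= 0 \/ gT (T j) L (ln y) <= 0).
  { intros i j y Hij Hy. destruct (Rle_or_lt (gT (T i) L (ln y)) 0) as [H|H]; auto.
    destruct (Rle_or_lt (gT (T j) L (ln y)) 0) as [H'|H']; auto. exfalso.
    apply gT_pos in H; auto. apply gT_pos in H'; auto.
    assert (Hij2 : INR (S i) <= INR j) by (apply le_INR; lia). rewrite S_INR in Hij2.
    unfold T in H, H'. nra. }
  assert (Hprod : forall i j y, i <> j -> 0 < y ->
     phi i y * phi j y = 0 /\ Derive (phi i) y * Derive (phi j) y = 0).
  { intros i j y Hij Hy. unfold phi.
    rewrite !(is_derive_unique _ _ _ (phiT_der al _ L y Hy)).
    destruct (Nat.lt_gt_cases i j) as [[Hl|Hl] _]; auto.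
    - destruct (Hdisj i j y Hl Hy) as [G|G]; destruct (phiT_vanish al _ L y Hy G) as [V1 V2];
        rewrite ?V1, ?V2; split; ring.
    - destruct (Hdisj j i y Hl Hy) as [G|G]; destruct (phiT_vanish al _ L y Hy G) as [V1 V2];
        rewrite ?V1, ?V2; split; ring. }
  intro k. exists phi. split. intros; auto.
  intros c Hc.
  destruct (good_lincomb k c phi (fun i _ => Hgood i)) as [Gl Dl].
  rewrite Qform_Fint.
  assert (Ept : forall y, 0 < y -> Fint (S (S (S n))) p u (lincomb k c phi) y =
      sumk k (fun i => c i ^ 2 * Fint (S (S (S n))) p u (phi i) y)).
  { intros y Hy. unfold Fint. rewrite Dl, !lincomb_sumk.
    rewrite (sumk_sq k (fun i => c i * Derive (phi i) y)).
    rewrite (sumk_sq k (fun i => c i * phi i y)).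
    symmetry. etransitivity. apply sumk_F.
    rewrite (sumk_ext k (fun i => (c i * Derive (phi i) y) ^ 2) (fun i => c i ^ 2 * Derive (phi i) y ^ 2)) by (intros; ring).
    rewrite (sumk_ext k (fun i => (c i * phi i y) ^ 2) (fun i => c i ^ 2 * phi i y ^ 2)) by (intros; ring).
    reflexivity.
    - intros i j _ _ Hij. destruct (Hprod i j y Hij Hy) as [P _].
      replace (c i * phi i y * (c j * phi j y)) with (c i * c j * (phi i y * phi j y)) by ring. rewrite P; ring.
    - intros i j _ _ Hij. destruct (Hprod i j y Hij Hy) as [_ P].
      replace (c i * Derive (phi i) y * (c j * Derive (phi j) y)) with (c i * c j * (Derive (phi i) y * Derive (phi j) y)) by ring. rewrite P; ring. }
  rewrite (RInt_ext _ (fun y => sumk k (fun i => c i ^ 2 * Fint (S (S (S n))) p u (phi i) y))).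
  2: { intros y Hy. rewrite Rmin_left, Rmax_right in Hy by lra. apply Ept; lra. }
  destruct (RInt_sumk k (fun i => c i ^ 2) (fun i => Fint (S (S (S n))) p u (phi i)) 0 R0) as [_ E].
  { intros i _. apply Fint_ex; auto; lra. }
  rewrite E. apply (sumk_neg k c (fun i => RInt (Fint (S (S (S n))) p u (phi i)) 0 R0)); auto.
  intros i _. rewrite <- Qform_Fint. auto.
Qed.

Theorem proposition1p6 (N : nat) (R0 p : R) (u : R -> R) :
  (3 <= N)%nat -> 0 < R0 -> p_S N < p ->
  singular_solution N p u ->
  (exists i : nat, (1 <= i)%nat /\ ith_critical_radius u i R0) ->
  (Rbar_lt (p_JL N) (Finite p) -> morse_index_finite N p u R0) /\
  (Rbar_lt (Finite p) (p_JL N) -> morse_index_infinite N p u R0).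
Proof.
  intros HN HR Hp Hs _.
  destruct (params N p HN Hp) as [Hp1 [Hth0 [Hth1 Hpth]]].
  assert (HA : p * Rpower (A_pN p N) (p - 1) = (theta p + 2) * (INR N - 2 - theta p)).
  { unfold A_pN. rewrite Rpower_mult.
    replace (1 / (p - 1) * (p - 1)) with 1 by (field; lra). rewrite Rpower_1.
    rewrite <- Hpth. ring. apply le_INR in HN; simpl in HN. nra. }
  assert (Hth : theta p = 2 / (p - 1)) by reflexivity.
  remember (theta p) as th eqn:Eth.
  assert (HN3 : 3 <= INR N) by (apply le_INR in HN; simpl in HN; lra).
  assert (HX : 0 < th * (INR N - 2 - th)) by nra.
  assert (Hs0 : 0 <= sqrt (INR N - 1)) by apply sqrt_pos.
  assert (Hs2 : sqrt (INR N - 1) ^ 2 = INR N - 1) by (simpl; rewrite Rmult_1_r; apply sqrt_sqrt; lra).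
  remember (sqrt (INR N - 1)) as s eqn:Es.
  split; intro Hjl.
  - apply finite_part; auto. rewrite HA.
    unfold p_JL in Hjl. destruct (Nat.leb_spec 11 N) as [E|E]; simpl in Hjl; [rewrite <- Es in Hjl|contradiction].
    assert (E' : 11 <= INR N) by (apply le_INR in E; simpl in E; lra).
    assert (HD : 0 < INR N - 4 - 2 * s) by nra.
    apply (alg_fin (INR N) s th); auto.
    assert (4 < (INR N - 4 - 2 * s) * (p - 1)).
    { assert (4 / (INR N - 4 - 2 * s) * (INR N - 4 - 2 * s) < (p - 1) * (INR N - 4 - 2 * s))
        by (apply Rmult_lt_compat_r; lra).
      replace (4 / (INR N - 4 - 2 * s) * (INR N - 4 - 2 * s)) with 4 in H by (field; lra). lra. }
    rewrite Hth. apply (Rmult_lt_reg_r (2 * (p - 1))). lra.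
    replace (2 / (p - 1) * (2 * (p - 1))) with 4 by (field; lra). lra.
  - apply infinite_part; auto. rewrite HA.
    apply (alg_inf (INR N) s th); auto.
    unfold p_JL in Hjl. destruct (Nat.leb_spec 11 N) as [E|E]; simpl in Hjl.
    + rewrite <- Es in Hjl. assert (E' : 11 <= INR N) by (apply le_INR in E; simpl in E; lra).
      assert (HD : 0 < INR N - 4 - 2 * s) by nra.
      assert ((INR N - 4 - 2 * s) * (p - 1) < 4).
      { assert ((p - 1) * (INR N - 4 - 2 * s) < 4 / (INR N - 4 - 2 * s) * (INR N - 4 - 2 * s))
          by (apply Rmult_lt_compat_r; lra).
        replace (4 / (INR N - 4 - 2 * s) * (INR N - 4 - 2 * s)) with 4 in H by (field; lra). lra. }
      rewrite Hth. apply (Rmult_lt_reg_r (2 * (p - 1))). lra.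
      replace (2 / (p - 1) * (2 * (p - 1))) with 4 by (field; lra). lra.
    + assert (E' : INR N <= 10) by (assert (N <= 10)%nat by lia; apply le_INR in H; simpl in H; lra).
      pose proof (small_N (INR N) s ltac:(lra) Hs0 Hs2). lra.
Qed.
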